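(* For $n>0$ and $J\subseteq S$, there is a bijection $\mathrm{NN}_n^J\simeq\mathrm{NC}_n^J$.
   Context: $S=\{s_1,\dots,s_{n-1}\}$ with $s_i=(i,i+1)$ the adjacent transpositions of $\mathfrak{S}_n$. For $J\subseteq S$, writing $J=S\setminus\{s_{j_1},\dots,s_{j_r}\}$ with $j_1<\dots<j_r$, the $J$-regions are $\{1,\dots,j_1\},\{j_1+1,\dots,j_2\},\dots,\{j_r+1,\dots,n\}$. For a set partition $\mathbf P$ of $[n]$, a bump is a pair $(a,b)$, $a<b$, with $a,b$ in the same part and no element of that part strictly between them. $\mathbf P$ is $J$-noncrossing if: (NC1) no two distinct elements of the same $J$-region lie in the same part; (NC2) whenever two distinct bumps $(i_1,i_2),(j_1,j_2)$ satisfy $i_1<j_1<i_2<j_2$, either $i_1,j_1$ lie in the same $J$-region or $i_2,j_1$ lie in the same $J$-region; (NC3) whenever two distinct bumps satisfy $i_1<j_1<j_2<i_2$, then $i_1$ and $j_1$ lie in different $J$-regions. $\mathbf P$ is $J$-nonnesting if (NN1) no two distinct elements of the same $J$-region lie in the same part, and (NN2) there are no two distinct bumps $(i_1,i_2),(j_1,j_2)$ with $i_1<j_1<j_2<i_2$. $\mathrm{NC}_n^J$ and $\mathrm{NN}_n^J$ denote the sets of $J$-noncrossing and $J$-nonnesting partitions of $[n]$. *)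

(* Defs.v *)
From mathcomp Require Import all_boot.
Set Implicit Arguments. Unset Strict Implicit. Unset Printing Implicit Defensive.

(* Conventions: the ground set [n] = {1,...,n} is represented by 'I_n, where
   the ordinal of value a stands for the integer a+1.  The generator
   s_k = (k,k+1) (1 <= k <= n-1) is represented by the ordinal k-1 : 'I_(n.-1);
   it swaps the elements represented by k-1 and k. *)

Section JPartitions.
Variables (n : nat) (J : {set 'I_(n.-1)}).

(* a and b lie in the same J-region iff every generator s_k with
   min(a,b) < k <= max(a,b) (1-based) lies in J, i.e. no region boundary
   separates them. *)
Definition same_region (a b : 'I_n) : bool :=
  [forall k : 'I_(n.-1), ((minn a b <= k) && (k < maxn a b)) ==> (k \in J)].

Definition bump (P : {set {set 'I_n}}) (a b : 'I_n) : bool :=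
  (a < b) &&
  [exists B in P, [&& a \in B, b \in B &
     [forall c in B, ~~ ((a < c) && (c < b))]]].

Definition cond1 (P : {set {set 'I_n}}) : bool :=
  [forall B in P, forall a in B, forall b in B,
     (a != b) ==> ~~ same_region a b].

Definition NC : {set {set {set 'I_n}}} :=
  [set P | [&& partition P [set: 'I_n], cond1 P,
    [forall i1, forall i2, forall j1, forall j2,
      [&& bump P i1 i2, bump P j1 j2, (i1, i2) != (j1, j2),
          i1 < j1, j1 < i2 & i2 < j2] ==>
      (same_region i1 j1 || same_region i2 j1)] &
    [forall i1, forall i2, forall j1, forall j2,
      [&& bump P i1 i2, bump P j1 j2, (i1, i2) != (j1, j2),
          i1 < j1, j1 < j2 & j2 < i2] ==>
      ~~ same_region i1 j1]]].

Definition NN : {set {set {set 'I_n}}} :=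
  [set P | [&& partition P [set: 'I_n], cond1 P &
    [forall i1, forall i2, forall j1, forall j2,
      ~~ [&& bump P i1 i2, bump P j1 j2, (i1, i2) != (j1, j2),
             i1 < j1, j1 < j2 & j2 < i2]]]].

End JPartitions.

(* Main.v *)
Require Import Defs.
From mathcomp Require Import all_boot zify.
Set Implicit Arguments. Unset Strict Implicit. Unset Printing Implicit Defensive.

Ltac slia := repeat match goal with H : ?t |- _ =>
  lazymatch t with is_true (_ <= _) => fail | @eq nat _ _ => fail | _ => clear H end end; lia.

Section S.
Variables (n : nat) (J : {set 'I_(n.-1)}).
Notation T := ('I_n).
Implicit Types x y a b c d : T.

Definition rgS (x : T) := [set k : 'I_(n.-1) | (k < x) && (k \notin J)].
Definition rg (x : T) := #|rgS x|.

Lemma rgS_sub x y : x <= y -> rgS x \subset rgS y.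
Proof.
move=> le; apply/subsetP => k; rewrite !inE => /andP[h1 ->]; rewrite andbT.
exact: leq_trans h1 le.
Qed.

Lemma rg_mono x y : x <= y -> rg x <= rg y.
Proof. by move=> /rgS_sub; apply: subset_leq_card. Qed.

Lemma rg_lt x y : rg x < rg y -> x < y.
Proof. by apply: contraLR; rewrite -!leqNgt => /rg_mono. Qed.

Lemma same_region_sym x y : same_region J x y = same_region J y x.
Proof. by rewrite /same_region minnC maxnC. Qed.

Lemma same_region_rg x y : same_region J x y = (rg x == rg y).
Proof.
wlog le : x y / x <= y.
  move=> H; case: (leqP x y) => h; first exact: H.
  by rewrite same_region_sym eq_sym H // ltnW.
rewrite /same_region /rg (minn_idPl le) (maxn_idPr le).
have sub := rgS_sub le.
apply/forallP/idP => [H|].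
  rewrite eqn_leq subset_leq_card //=.
  apply: subset_leq_card; apply/subsetP => k; rewrite !inE => /andP[h1 h2].
  rewrite h2 andbT ltnNge; apply/negP => h3.
  by move: (H k); rewrite h3 h1 /= => h4; rewrite h4 in h2.
move=> /eqP e k; apply/implyP => /andP[h1 h2].
have: rgS y \subset rgS x.
  by move: (subset_leqif_cards sub) => [_]; rewrite e eqxx => /esym /eqP ->.
move/subsetP => /(_ k); rewrite !inE h2 /=.
case: (boolP (k \in J)) => // hk /(_ isT) /andP[h3 _].
by move: h3; rewrite ltnNge h1.
Qed.


Section Part.
Variable P : {set {set T}}.
Hypothesis hP : partition P [set: T].

Lemma pb_in x : x \in pblock P x.
Proof. by rewrite mem_pblock (cover_partition hP) inE. Qed.
Lemma pb_mem x : pblock P x \in P.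
Proof. by rewrite pblock_mem // (cover_partition hP) inE. Qed.
Lemma pb_def B x : B \in P -> x \in B -> pblock P x = B.
Proof. exact: def_pblock (partition_trivIset hP). Qed.
Lemma pb_same x y : y \in pblock P x -> pblock P y = pblock P x.
Proof. exact: same_pblock (partition_trivIset hP). Qed.
Lemma pb_sym x y : y \in pblock P x -> x \in pblock P y.
Proof. by move=> h; rewrite (pb_same h) pb_in. Qed.

Lemma bumpP a b : reflect (a < b /\ b \in pblock P a /\
   forall c, c \in pblock P a -> ~~ ((a < c) && (c < b))) (Defs.bump P a b).
Proof.
apply: (iffP andP) => [[lt /existsP [B /andP[BP /and3P[aB bB /forallP H]]]]|[lt [bB H]]].
  rewrite (pb_def BP aB); split => //; split => // c cB.
  by move: (H c); rewrite cB.
split => //; apply/existsP; exists (pblock P a); rewrite pb_mem pb_in bB /=.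
by apply/forallP => c; apply/implyP => /H.
Qed.

Lemma bump_next a b : a < b -> b \in pblock P a ->
  exists c, Defs.bump P a c /\ c <= b.
Proof.
move=> lt bB.
have Pb : (b \in pblock P a) && (a < b) by rewrite bB lt.
case: (@arg_minnP _ b (fun c : T => (c \in pblock P a) && (a < c)) (fun c : T => nat_of_ord c) Pb) => c /andP[cB ac] Hmin.
exists c; split; last by apply: Hmin; rewrite bB lt.
apply/bumpP; split => //; split => // d dB; apply/negP => /andP[ad dc].
by move: (Hmin d); rewrite dB ad => /(_ isT); rewrite leqNgt dc.
Qed.

Lemma bump_prev a b : a < b -> b \in pblock P a ->
  exists c, Defs.bump P c b /\ a <= c.
Proof.
move=> lt bB.
have Pa : (a \in pblock P a) && (a < b) by rewrite pb_in lt.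
case: (@arg_maxnP _ a (fun c : T => (c \in pblock P a) && (c < b)) (fun c : T => nat_of_ord c) Pa) => c /andP[cB cb] Hmax.
exists c; split; last by apply: Hmax; rewrite pb_in lt.
apply/bumpP; split => //; split; first by rewrite (pb_same cB).
move=> d; rewrite (pb_same cB) => dB; apply/negP => /andP[cd db].
move: (Hmax d); rewrite dB db => /(_ isT). lia.

Qed.

Lemma bump_same a b : Defs.bump P a b -> b \in pblock P a.
Proof. by case/bumpP => _ []. Qed.

Lemma bump_lt a b : Defs.bump P a b -> a < b.
Proof. by case/bumpP. Qed.

End Part.

Definition bumps (P : {set {set T}}) : {set T * T} :=
  [set p | Defs.bump P p.1 p.2].

Lemma sub_block P Q : partition P [set: T] -> partition Q [set: T] ->
  (forall a b, Defs.bump P a b -> Defs.bump Q a b) ->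
  forall x y, y \in pblock P x -> y \in pblock Q x.
Proof.
move=> hP hQ bPQ.
have key : forall k x y, y - x < k -> x <= y -> y \in pblock P x -> y \in pblock Q x.
  elim => [//|k IH] x y hk le yB.
  case: (ltngtP x y) le => // [lt _| e _]; last first.
    by rewrite (val_inj e) pb_in.
  case: (bump_next hP lt yB) => c [bc cy].
  have cQ := bump_same hQ (bPQ _ _ bc).
  have cP := bump_same hP bc.
  rewrite -(pb_same hQ cQ); apply: IH.
  - have := bump_lt hP bc; lia.
  - done.
  - by rewrite (pb_same hP cP).
move=> x y yB.
case: (leqP x y) => le; first by apply: (key (y - x).+1).
apply: pb_sym => //; apply: (key (x - y).+1) => //; first exact: ltnW.
exact: pb_sym.
Qed.

Lemma part_sub P Q : partition P [set: T] -> partition Q [set: T] ->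
  (forall x, pblock P x = pblock Q x) -> P \subset Q.
Proof.
move=> hP hQ e; apply/subsetP => B BP.
case/set0Pn: (partition_neq0 hP BP) => x xB.
by rewrite -(pb_def hP BP xB) e pb_mem.
Qed.

Lemma bumps_inj P Q : partition P [set: T] -> partition Q [set: T] ->
  bumps P = bumps Q -> P = Q.
Proof.
move=> hP hQ eb.
have bPQ a b : Defs.bump P a b -> Defs.bump Q a b.
  move=> h; have: (a, b) \in bumps Q by rewrite -eb inE.
  by rewrite inE.
have bQP a b : Defs.bump Q a b -> Defs.bump P a b.
  move=> h; have: (a, b) \in bumps P by rewrite eb inE.
  by rewrite inE.
have eqb x : pblock P x = pblock Q x.
  by apply/setP => y; apply/idP/idP; apply: sub_block.
by apply/eqP; rewrite eqEsubset !part_sub.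
Qed.

Implicit Types E F : {set T * T}.
Implicit Types P Q : {set {set T}}.

Definition mat E := [forall e in E, forall f in E,
  ((e.1 == f.1) || (e.2 == f.2)) ==> (e == f)].
Definition vld E := [forall e in E, rg e.1 < rg e.2].
Definition nnb E := [forall e in E, forall f in E, ~~ ((e.1 < f.1) && (f.2 < e.2))].
Definition ncb E := [forall e in E, forall f in E,
  ([&& e.1 < f.1, f.1 < e.2 & e.2 < f.2] ==> ((rg e.1 == rg f.1) || (rg f.1 == rg e.2)))
  && (((e.1 < f.1) && (f.2 < e.2)) ==> (rg e.1 != rg f.1))].

Lemma matP E : reflect (forall e f, e \in E -> f \in E -> (e.1 = f.1 \/ e.2 = f.2) -> e = f) (mat E).
Proof.
apply: (iffP forallP) => [H e f eE fE h|H e].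
  move: (H e); rewrite eE => /forallP /(_ f); rewrite fE /=.
  by case: h => ->; rewrite eqxx ?orbT => /eqP.
apply/implyP => eE; apply/forallP => f; apply/implyP => fE; apply/implyP.
by case/orP => /eqP h; apply/eqP; apply: H => //; [left|right].
Qed.

Lemma vldP E : reflect (forall a b, (a, b) \in E -> rg a < rg b) (vld E).
Proof.
apply: (iffP forallP) => [H a b ab|H [a b]].
  by move: (H (a, b)); rewrite ab.
by apply/implyP => /H.
Qed.

Lemma nnbP E : reflect (forall a b c d, (a, b) \in E -> (c, d) \in E -> a < c -> d < b -> False) (nnb E).
Proof.
apply: (iffP forallP) => [H a b c d ab cd ac db|H [a b]].
  by move: (H (a, b)); rewrite ab => /forallP /(_ (c, d)); rewrite cd /= ac db.
apply/implyP => ab; apply/forallP => [[c d]]; apply/implyP => cd /=.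
by apply/negP => /andP [ac db]; apply: (H a b c d).
Qed.

Lemma ncbP E : reflect (forall a b c d, (a, b) \in E -> (c, d) \in E ->
   (a < c -> c < b -> b < d -> rg a = rg c \/ rg c = rg b) /\
   (a < c -> d < b -> rg a <> rg c)) (ncb E).
Proof.
apply: (iffP forallP) => [H a b c d ab cd|H [a b]].
  move: (H (a, b)); rewrite ab => /forallP /(_ (c, d)); rewrite cd /=.
  case/andP => h1 h2; split.
  - move=> ac cb bd; move: h1; rewrite ac cb bd /=.
    by case/orP => /eqP; [left|right].
  - by move=> ac db; move: h2; rewrite ac db /= => /eqP.
apply/implyP => ab; apply/forallP => [[c d]]; apply/implyP => cd /=.
case: (H a b c d ab cd) => h1 h2; apply/andP; split.
  apply/implyP => /and3P [ac cb bd].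
  by case: (h1 ac cb bd) => ->; rewrite eqxx ?orbT.
by apply/implyP => /andP [ac db]; apply/eqP; apply: h2.
Qed.

Lemma inbumps P a b : ((a, b) \in bumps P) = Defs.bump P a b.
Proof. by rewrite inE. Qed.

Lemma mat_bumps P : partition P [set: T] -> mat (bumps P).
Proof.
move=> hP; apply/matP => [[a b] [c d]]; rewrite !inbumps /= => ab cd [e|e].
  subst c; case/(bumpP hP): ab => ab [bB Hb]; case/(bumpP hP): cd => ad [dB Hd].
  case: (ltngtP b d) => [bd|db|/val_inj -> //].
  - by move: (Hd b bB); rewrite ab bd.
  - by move: (Hb d dB); rewrite ad db.
subst d; case/(bumpP hP): ab => ab [bB Hb]; case/(bumpP hP): cd => cb [bC Hc].
have aC : a \in pblock P c by rewrite -(pb_same hP bC) (pb_same hP bB) pb_in.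
have cB : c \in pblock P a by apply: pb_sym.
case: (ltngtP a c) => [ac|ca|/val_inj -> //].
- by move: (Hb c cB); rewrite ac cb.
- by move: (Hc a aC); rewrite ca ab.
Qed.

Lemma cond1_vld P : partition P [set: T] -> cond1 J P = vld (bumps P).
Proof.
move=> hP; apply/idP/vldP => [H a b|H].
  rewrite inbumps => ab; case/(bumpP hP): (ab) => lt [bB _].
  move/forallP: H => /(_ (pblock P a)); rewrite (pb_mem hP) /= => /forallP /(_ a).
  rewrite (pb_in hP) /= => /forallP /(_ b); rewrite bB /= => /implyP.
  have -> : a != b by rewrite neq_ltn lt.
  rewrite same_region_rg => /(_ isT) ne.
  by rewrite ltn_neqAle ne rg_mono // ltnW.
apply/forallP => B; apply/implyP => BP; apply/forallP => x; apply/implyP => xB.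
apply/forallP => y; apply/implyP => yB; apply/implyP => ne.
rewrite same_region_rg.
wlog lt : x y xB yB ne / x < y.
  move=> W; case: (ltngtP x y) => [h|h|/val_inj e]; first exact: W.
  - by rewrite eq_sym; apply: W => //; rewrite eq_sym.
  - by rewrite e eqxx in ne.
have yb : y \in pblock P x by rewrite (pb_def hP BP xB).
case: (bump_next hP lt yb) => c [bc cy].
have := H x c; rewrite inbumps => /(_ bc) h.
have := rg_mono cy; lia.
Qed.

Lemma pair_neq a b c d : a < c -> (a, b) != (c, d).
Proof. by move=> ac; apply/negP => /eqP [e _]; move: ac; rewrite e ltnn. Qed.

Lemma NN_E P : (P \in NN J) = [&& partition P [set: T], vld (bumps P) & nnb (bumps P)].
Proof.
rewrite inE; case hP: (partition P [set: T]) => //=; rewrite cond1_vld //.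
congr (_ && _); apply/idP/nnbP => [H a b c d ab cd ac db | H].
  move/forallP: H => /(_ a) /forallP /(_ b) /forallP /(_ c) /forallP /(_ d).
  rewrite -!inbumps ab cd ac db /=.
  have cdl : c < d by apply: (bump_lt hP); rewrite -inbumps.
  by rewrite cdl pair_neq.
apply/forallP => a; apply/forallP => b; apply/forallP => c; apply/forallP => d.
apply/negP => /andP[ab /andP[cd /andP[_ /andP[ac /andP[_ db]]]]].
by apply: (H a b c d); rewrite ?inbumps.
Qed.

Lemma NC_E P : (P \in NC J) = [&& partition P [set: T], vld (bumps P) & ncb (bumps P)].
Proof.
rewrite inE; case hP: (partition P [set: T]) => //=; rewrite cond1_vld //.
congr (_ && _); apply/andP/ncbP => [[H2 H3] a b c d ab cd | H].
  have ne : a < c -> (a, b) != (c, d) by apply: pair_neq.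
  split.
  - move=> ac cb bd.
    move/forallP: H2 => /(_ a) /forallP /(_ b) /forallP /(_ c) /forallP /(_ d).
    rewrite -!inbumps ab cd ac cb bd ne //= !same_region_rg.
    by case/orP => /eqP; [left | right].
  - move=> ac db.
    move/forallP: H3 => /(_ a) /forallP /(_ b) /forallP /(_ c) /forallP /(_ d).
    have cdl : c < d by apply: (bump_lt hP); rewrite -inbumps.
    rewrite -!inbumps ab cd ac db cdl ne //= same_region_rg.
    by move/eqP.
split.
  apply/forallP => a; apply/forallP => b; apply/forallP => c; apply/forallP => d.
  apply/implyP => /andP[ab /andP[cd /andP[_ /andP[ac /andP[cb bd]]]]].
  rewrite -!inbumps in ab cd.
  rewrite !same_region_rg; case: (H a b c d ab cd) => [/(_ ac cb bd) h _].
  by case: h => ->; rewrite eqxx ?orbT.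
apply/forallP => a; apply/forallP => b; apply/forallP => c; apply/forallP => d.
apply/implyP => /andP[ab /andP[cd /andP[_ /andP[ac /andP[_ db]]]]].
rewrite -!inbumps in ab cd.
rewrite same_region_rg; case: (H a b c d ab cd) => [_ /(_ ac db) h].
by apply/eqP.
Qed.

Lemma bumpD P a b : reflect (a < b /\ exists C, [/\ C \in P, a \in C, b \in C &
   forall c, c \in C -> ~~ ((a < c) && (c < b))]) (Defs.bump P a b).
Proof.
apply: (iffP andP) => [[lt /existsP [C /andP[CP /and3P[aC bC /forallP H]]]]|[lt [C [CP aC bC H]]]].
  split => //; exists C; split => // c cC.
  by move: (H c); rewrite cC.
split => //; apply/existsP; exists C; rewrite CP aC bC /=.
by apply/forallP => c; apply/implyP => /H.
Qed.

Lemma partT_intro P : set0 \notin P -> (forall x, exists2 B, B \in P & x \in B) ->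
  (forall B C x, B \in P -> C \in P -> x \in B -> x \in C -> B = C) ->
  partition P [set: T].
Proof.
move=> h0 hc hu; rewrite /partition h0 andbT; apply/andP; split.
  apply/eqP/setP => x; rewrite inE; apply/bigcupP.
  by case: (hc x) => B BP xB; exists B.
apply/trivIsetP => B C BP CP ne; rewrite -setI_eq0; apply/eqP/setP => x.
rewrite !inE; apply/negP => /andP[xB xC].
by move: ne; rewrite (hu B C x BP CP xB xC) eqxx.
Qed.

Definition P0 : {set {set T}} := [set [set x] | x : T].

Lemma P0_part : partition P0 [set: T].
Proof.
apply: partT_intro.
- apply/imsetP => [[x _ e]]; have : x \in (set0 : {set T}) by rewrite e set11.
  by rewrite inE.
- by move=> x; exists [set x]; [apply: imset_f | rewrite set11].
- move=> B C x /imsetP[y _ ->] /imsetP[z _ ->].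
  by rewrite !inE => /eqP -> /eqP ->.
Qed.

Lemma P0_bumps : bumps P0 = set0.
Proof.
apply/setP => [[a b]]; rewrite inbumps inE.
apply/negP => /bumpD [lt [C [/imsetP[y _ ->] aC bC _]]].
by move: aC bC lt; rewrite !inE => /eqP -> /eqP ->; rewrite ltnn.
Qed.

Lemma merge P A B a b : partition P [set: T] -> A \in P -> B \in P ->
  a \in A -> b \in B -> a < b ->
  (forall x, x \in A -> x <= a) -> (forall x, x \in B -> b <= x) ->
  partition ((A :|: B) |: ((P :\ A) :\ B)) [set: T] /\
  bumps ((A :|: B) |: ((P :\ A) :\ B)) = (a, b) |: bumps P.
Proof.
move=> hP AP BP aA bB ab hA hB.
have AB : B != A.
  apply/negP => /eqP e; move: (hA b); rewrite -e bB => /(_ isT); slia.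
split.
  have h1 := partitionD1 hP AP.
  have BP' : B \in P :\ A by rewrite in_setD1 AB.
  have h2 := partitionD1 h1 BP'.
  have h3 := @partitionU1 _ _ _ (A :|: B) h2.
  have e : (A :|: B) :|: ([set: T] :\: A :\: B) = [set: T].
    by apply/setP => x; rewrite !inE; case: (x \in A); case: (x \in B).
  rewrite -e; apply: h3.
    by apply/set0Pn; exists a; rewrite inE aA.
  by rewrite -setI_eq0; apply/eqP/setP => x; rewrite !inE; case: (x \in A); case: (x \in B).
apply/setP => [[x y]]; rewrite in_setU1 !inbumps.
apply/bumpD/idP => [[xy [C [CP xC yC H]]]|].
  move: CP; rewrite in_setU1 !in_setD1 => /orP [/eqP eC|/and3P [_ _ CP]]; last first.
    by apply/orP; right; apply/bumpD; split => //; exists C.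
  subst C; move: xC yC; rewrite !inE.
  case/orP => xA; case/orP => yB.
  - apply/orP; right; apply/bumpD; split => //; exists A; split => // c cA.
    by apply: H; rewrite inE cA.
  - apply/orP; left.
    have xa : x = a.
      apply: val_inj; apply/eqP; rewrite eqn_leq hA //=; rewrite leqNgt; apply/negP => xa.
      by move: (H a); rewrite inE aA xa /= => /(_ isT); move: (hB y yB); slia.
    have yb : y = b.
      apply: val_inj; apply/eqP; rewrite eqn_leq hB // andbT; rewrite leqNgt; apply/negP => yb.
      by move: (H b); rewrite inE bB orbT yb /= => /(_ isT); move: (hA x xA); slia.
    by rewrite xa yb.
  - by move: (hB x xA) (hA y yB); slia.
  - apply/orP; right; apply/bumpD; split => //; exists B; split => // c cB.
    by apply: H; rewrite inE cB orbT.
case/orP => [/eqP [-> ->]|/bumpD [xy [C [CP xC yC H]]]].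
  split => //; exists (A :|: B); split.
  - by rewrite in_setU1 eqxx.
  - by rewrite inE aA.
  - by rewrite inE bB orbT.
  - move=> c; rewrite inE => /orP [cA|cB]; move: (hA c) (hB c); rewrite ?cA ?cB => h1 h2.
    + by move: (h1 isT); slia.
    + by move: (h2 isT); slia.
split => //.
case: (eqVneq C A) => [eCA|neA].
  subst C; exists (A :|: B); split.
  - by rewrite in_setU1 eqxx.
  - by rewrite inE xC.
  - by rewrite inE yC.
  - move=> c; rewrite inE => /orP [cA|cB]; first exact: H.
    by move: (hB c cB) (hA y yC); slia.
case: (eqVneq C B) => [eCB|neB].
  subst C; exists (A :|: B); split.
  - by rewrite in_setU1 eqxx.
  - by rewrite inE xC orbT.
  - by rewrite inE yC orbT.
  - move=> c; rewrite inE => /orP [cA|cB]; last exact: H.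
    by move: (hA c cA) (hB x xC); slia.
exists C; split => //.
by rewrite in_setU1 !in_setD1 neA neB CP !orbT.
Qed.

Lemma mat_sub E F : F \subset E -> mat E -> mat F.
Proof.
move=> /subsetP s /matP H; apply/matP => e f eF fF h.
by apply: H => //; apply: s.
Qed.

Lemma realize E : mat E -> (forall a b, (a, b) \in E -> a < b) ->
  exists P, partition P [set: T] /\ bumps P = E.
Proof.
have [k] := ubnP #|E|; elim: k E => // k IH E hk hm hlt.
case: (set_0Vmem E) => [->|[[a b] abE]].
  by exists P0; rewrite P0_part P0_bumps.
set E' := E :\ (a, b).
have sub : E' \subset E by apply: subsetDl.
have hk' : #|E'| < k by move: hk; rewrite (cardsD1 (a, b) E) abE add1n ltnS.
have hm' := mat_sub sub hm.
have hlt' : forall x y, (x, y) \in E' -> x < y.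
  by move=> x y; rewrite in_setD1 => /andP [_ /hlt].
case: (IH E' hk' hm' hlt') => P [hP eP].
have ab := hlt a b abE.
have hA : forall x, x \in pblock P a -> x <= a.
  move=> x xA; rewrite leqNgt; apply/negP => ax.
  case: (bump_next hP ax xA) => c [bc _].
  have : (a, c) \in E' by rewrite -eP inbumps.
  rewrite in_setD1 => /andP [ne acE].
  have /eqP := (matP _ hm _ _ acE abE (or_introl erefl)).
  by rewrite (negbTE ne).
have hB : forall x, x \in pblock P b -> b <= x.
  move=> x xB; rewrite leqNgt; apply/negP => xb.
  case: (bump_prev hP xb (pb_sym hP xB)) => c [cb _].
  have : (c, b) \in E' by rewrite -eP inbumps.
  rewrite in_setD1 => /andP [ne cbE].
  have /eqP := (matP _ hm _ _ cbE abE (or_intror erefl)).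
  by rewrite (negbTE ne).
case: (merge hP (pb_mem hP a) (pb_mem hP b) (pb_in hP a) (pb_in hP b) ab hA hB) => h1 h2.
by eexists; split; first exact: h1; rewrite h2 eP setD1K.
Qed.

Definition lp E : {set T} := [set e.1 | e in E].
Definition rp E : {set T} := [set e.2 | e in E].

Lemma matE E : mat E = (#|lp E| == #|E|) && (#|rp E| == #|E|).
Proof.
apply/matP/andP => [H|[/imset_injP H1 /imset_injP H2] e f eE fE [h|h]].
- by split; apply/imset_injP => e f eE fE h; apply: H => //; [left|right].
- exact: H1.
- exact: H2.
Qed.

Lemma lpP E x : reflect (exists y, (x, y) \in E) (x \in lp E).
Proof.
apply: (iffP imsetP) => [[[u v] e /= ->]|[y xy]]; first by exists v.
by exists (x, y).
Qed.

Lemma rpP E y : reflect (exists x, (x, y) \in E) (y \in rp E).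
Proof.
apply: (iffP imsetP) => [[[u v] e /= ->]|[x xy]]; first by exists u.
by exists (x, y).
Qed.

Lemma vld_lt E a b : vld E -> (a, b) \in E -> a < b.
Proof. by move=> /vldP h /h; apply: rg_lt. Qed.

Section Uniq.
Variable Qp : {set T * T} -> Prop.
Hypothesis key : forall E1 E2 a1 a2 b b1 b2, Qp E1 -> Qp E2 -> vld E1 -> vld E2 ->
  (a1, b) \in E1 -> (a2, b2) \in E1 -> (a2, b) \in E2 -> (a1, b1) \in E2 ->
  a1 < a2 -> b < b2 -> b < b1 -> False.

Lemma uniq_step E1 E2 b : Qp E1 -> Qp E2 -> mat E1 -> mat E2 -> vld E1 -> vld E2 ->
  lp E1 = lp E2 -> rp E1 = rp E2 ->
  (forall b' a, b' < b -> ((a, b') \in E1) = ((a, b') \in E2)) ->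
  forall a1, (a1, b) \in E1 -> (a1, b) \in E2.
Proof.
move=> Q1 Q2 m1 m2 v1 v2 el er IH a1 a1b.
have : b \in rp E2 by rewrite -er; apply/rpP; exists a1.
case/rpP => a2 a2b.
case: (eqVneq a1 a2) => [-> //|ne].
have : a1 \in lp E2 by rewrite -el; apply/lpP; exists b.
case/lpP => b1 a1b1.
have : a2 \in lp E1 by rewrite el; apply/lpP; exists b.
case/lpP => b2 a2b2.
case: (ltngtP b b1) => [bb1|h|/val_inj e]; last by rewrite e.
2:{ rewrite -IH // in a1b1.
  by case: (matP _ m1 _ _ a1b a1b1 (or_introl erefl)) => e; rewrite e ltnn in h. }
have bb2 : b < b2.
  case: (ltngtP b b2) => [//|h|/val_inj e].
  - rewrite IH // in a2b2.
    by case: (matP _ m2 _ _ a2b a2b2 (or_introl erefl)) => e; rewrite e ltnn in h.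
  - rewrite -e in a2b2.
    by case: (matP _ m1 _ _ a1b a2b2 (or_intror erefl)) => e2; rewrite e2 eqxx in ne.
case: (ltngtP a1 a2) => [h|h|/val_inj e]; last by rewrite e eqxx in ne.
- by case: (key Q1 Q2 v1 v2 a1b a2b2 a2b a1b1 h bb2 bb1).
- by case: (key Q2 Q1 v2 v1 a2b a1b1 a1b a2b2 h bb1 bb2).
Qed.

Lemma uniq_match E1 E2 : Qp E1 -> Qp E2 -> mat E1 -> mat E2 -> vld E1 -> vld E2 ->
  lp E1 = lp E2 -> rp E1 = rp E2 -> E1 = E2.
Proof.
move=> Q1 Q2 m1 m2 v1 v2 el er.
suff H : forall k (b : T), b < k -> forall a, ((a, b) \in E1) = ((a, b) \in E2).
  by apply/setP => [[a b]]; apply: (H b.+1).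
elim => [//|k IH] b bk a.
have IH' : forall b' a, b' < b -> ((a, b') \in E1) = ((a, b') \in E2).
  by move=> b' a' h; apply: IH; apply: leq_trans h _.
apply/idP/idP.
- exact: (uniq_step Q1 Q2 m1 m2 v1 v2 el er IH').
- apply: (uniq_step Q2 Q1 m2 m1 v2 v1 (esym el) (esym er)).
  by move=> b' a' h; rewrite IH'.
Qed.
End Uniq.

Definition pot (w : T -> T -> nat) E := \sum_(e in E) w e.1 e.2.

Lemma swap_ok E a b c d : mat E -> vld E -> (a, b) \in E -> (c, d) \in E -> a < c ->
  rg a < rg d -> rg c < rg b ->
  let E' := (a, d) |: ((c, b) |: ((E :\ (a, b)) :\ (c, d))) in
  [/\ mat E', vld E', lp E' = lp E, rp E' = rp E &
   forall w, pot w E' + (w a b + w c d) = pot w E + (w a d + w c b)].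
Proof.
move=> m v ab cd ac rad rcb E'.
set R := (E :\ (a, b)) :\ (c, d).
have ne : (a, b) != (c, d) by apply: pair_neq.
have cdE : (c, d) \in E :\ (a, b) by rewrite in_setD1 eq_sym ne.
have eE : E = (a, b) |: ((c, d) |: R) by rewrite setD1K // setD1K.
have abR : (a, b) \notin (c, d) |: R by rewrite in_setU1 (negbTE ne) /= !inE eqxx andbF.
have cdR : (c, d) \notin R by rewrite !inE eqxx.
have neac : a != c by rewrite neq_ltn ac.
have adE : (a, d) \notin E.
  apply/negP => adE.
  case: (matP _ m _ _ adE cd (or_intror erefl)) => e.
  by rewrite e eqxx in neac.
have cbE : (c, b) \notin E.
  apply/negP => cbE.
  case: (matP _ m _ _ cbE ab (or_intror erefl)) => e.
  by rewrite e eqxx in neac.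
have RE : R \subset E by apply/subsetP => x; rewrite !inE => /and3P[_ _ ->].
have adR : (a, d) \notin (c, b) |: R.
  rewrite in_setU1 negb_or; apply/andP; split.
    by apply/negP => /eqP [e _]; rewrite e eqxx in neac.
  by apply: contra adE; apply: (subsetP RE).
have cbR : (c, b) \notin R by apply: contra cbE; apply: (subsetP RE).
have hl : lp E' = lp E.
  by rewrite eE /E' /lp !imsetU1.
have hr : rp E' = rp E.
  by rewrite eE /E' /rp !imsetU1 /= setUCA.
have hc : #|E'| = #|E|.
  by rewrite eE /E' !cardsU1 adR cbR abR cdR.
split => //.
- by move: m; rewrite !matE hl hr hc.
- apply/vldP => x y; rewrite /E' !in_setU1 => /orP [/eqP [-> ->]//|/orP [/eqP [-> ->]//|]].
  by move/(subsetP RE); move/vldP: v; apply.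
- move=> w; rewrite /pot /E' {2}eE !big_setU1 //= addnA addnA addnC.
  rewrite -/R; slia.
Qed.

Section Exist.
Variable Qp : pred {set T * T}.
Variable w : T -> T -> nat.
Hypothesis hsw : forall E, mat E -> vld E -> ~~ Qp E ->
  exists a b c d, [/\ (a, b) \in E, (c, d) \in E, a < c,
     rg a < rg d /\ rg c < rg b & w a d + w c b < w a b + w c d].

Lemma exist_match E : mat E -> vld E ->
  exists F, [/\ mat F, vld F, Qp F, lp F = lp E & rp F = rp E].
Proof.
have [k] := ubnP (pot w E); elim: k E => // k IH E hk m v.
case hQ: (Qp E); first by exists E.
case: (hsw m v (negbT hQ)) => a [b [c [d [ab cd ac [rad rcb] hw]]]].
case: (swap_ok m v ab cd ac rad rcb) => m' v' el er hp.
have hk' : pot w ((a, d) |: ((c, b) |: ((E :\ (a, b)) :\ (c, d)))) < k.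
  by move: (hp w) hk; slia.
case: (IH _ hk' m' v') => F [mF vF QF elF erF].
by exists F; split => //; rewrite ?elF ?erF.
Qed.
End Exist.

Lemma arith1 (p q x y : nat) : p < q -> x < y -> p * y + q * x < p * x + q * y.
Proof. move=> h1 h2; nia. Qed.

Lemma key_nn : forall E1 E2 a1 a2 b b1 b2, nnb E1 -> nnb E2 -> vld E1 -> vld E2 ->
  (a1, b) \in E1 -> (a2, b2) \in E1 -> (a2, b) \in E2 -> (a1, b1) \in E2 ->
  a1 < a2 -> b < b2 -> b < b1 -> False.
Proof.
move=> E1 E2 a1 a2 b b1 b2 _ /nnbP n2 _ _ _ _ h1 h2 lt _ lt2.
exact: (n2 a1 b1 a2 b h2 h1 lt lt2).
Qed.

Lemma key_nc : forall E1 E2 a1 a2 b b1 b2, ncb E1 -> ncb E2 -> vld E1 -> vld E2 ->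
  (a1, b) \in E1 -> (a2, b2) \in E1 -> (a2, b) \in E2 -> (a1, b1) \in E2 ->
  a1 < a2 -> b < b2 -> b < b1 -> False.
Proof.
move=> E1 E2 a1 a2 b b1 b2 /ncbP c1 /ncbP c2 v1 v2 e1 e2 e3 e4 lt lt2 lt1.
have a2b := vld_lt v2 e3.
have r2 : rg a2 < rg b by move/vldP: v2; apply.
case: (c1 a1 b a2 b2 e1 e2) => [/(_ lt a2b lt2) h _].
case: (c2 a1 b1 a2 b e4 e3) => [_ /(_ lt lt1) h'].
case: h => // e; by rewrite e ltnn in r2.
Qed.

Lemma hsw_nn E : mat E -> vld E -> ~~ nnb E ->
  exists a b c d, [/\ (a, b) \in E, (c, d) \in E, a < c,
     rg a < rg d /\ rg c < rg b &
     (fun x y : T => x * (n - y)) a d + (fun x y : T => x * (n - y)) c b <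
     (fun x y : T => x * (n - y)) a b + (fun x y : T => x * (n - y)) c d].
Proof.
move=> m v /forallPn [[a b]]; rewrite negb_imply => /andP [ab /forallPn [[c d]]].
rewrite negb_imply negbK => /andP [cd /andP [/= ac db]].
exists a, b, c, d; split => //.
  have r1 := rg_mono (ltnW ac); have r2 := rg_mono (ltnW db).
  have := vldP _ v c d cd; split; slia.
have bn := ltn_ord b.
cbv beta; by apply: arith1 => //; slia.
Qed.

Definition vv (x : T) := n.+1 * rg x + (n - x).

Lemma vv_lt x y : rg x < rg y -> vv x < vv y.
Proof.
move=> h; rewrite /vv.
have := leq_mul (leqnn n.+1) h; rewrite mulnS.
have := ltn_ord x; have := ltn_ord y; slia.
Qed.

Lemma hsw_nc E : mat E -> vld E -> ~~ ncb E ->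
  exists a b c d, [/\ (a, b) \in E, (c, d) \in E, a < c,
     rg a < rg d /\ rg c < rg b &
     (fun x y : T => vv x * y) a d + (fun x y : T => vv x * y) c b <
     (fun x y : T => vv x * y) a b + (fun x y : T => vv x * y) c d].
Proof.
move=> m v /forallPn [[a b]]; rewrite negb_imply => /andP [ab /forallPn [[c d]]].
rewrite negb_imply negb_and => /andP [cd /orP [|]] /=.
  rewrite negb_imply negb_or => /andP [/and3P [ac cb bd] /andP [n1 n2]].
  have r1 := rg_mono (ltnW ac); have r2 := rg_mono (ltnW cb); have r3 := rg_mono (ltnW bd).
  have r1' : rg a < rg c by rewrite ltn_neqAle n1 r1.
  have r2' : rg c < rg b by rewrite ltn_neqAle n2 r2.
  exists a, b, c, d; split => //; first by split; slia.
  cbv beta; by apply: arith1 => //; apply: vv_lt.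
rewrite negb_imply negbK => /andP [/andP [ac db] /eqP e].
have r3 := rg_mono (ltnW db).
have rcd := vldP _ v c d cd.
exists a, b, c, d; split => //; first by split; [rewrite e|]; slia.
have : vv c < vv a.
  rewrite /vv e; have := ltn_ord c; slia.
move=> h; cbv beta; have := arith1 h db; slia.
Qed.

Definition EN := [set E | [&& mat E, vld E & nnb E]].
Definition EC := [set E | [&& mat E, vld E & ncb E]].

Lemma bumps_lt E : vld E -> forall a b, (a, b) \in E -> a < b.
Proof. by move=> v a b; apply: vld_lt. Qed.

Lemma card_NN : #|NN J| = #|EN|.
Proof.
rewrite -(@card_in_imset _ _ bumps).
  apply: eq_card => E; rewrite inE; apply/imsetP/and3P.
    case=> P; rewrite NN_E => /and3P [hP v nn] ->.
    by split => //; apply: mat_bumps.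
  case=> m v nn; case: (realize m (bumps_lt v)) => P [hP eP].
  by exists P => //; rewrite NN_E hP eP v nn.
move=> P Q; rewrite !NN_E => /and3P [hP _ _] /and3P [hQ _ _].
exact: bumps_inj.
Qed.

Lemma card_NC : #|NC J| = #|EC|.
Proof.
rewrite -(@card_in_imset _ _ bumps).
  apply: eq_card => E; rewrite inE; apply/imsetP/and3P.
    case=> P; rewrite NC_E => /and3P [hP v nn] ->.
    by split => //; apply: mat_bumps.
  case=> m v nn; case: (realize m (bumps_lt v)) => P [hP eP].
  by exists P => //; rewrite NC_E hP eP v nn.
move=> P Q; rewrite !NC_E => /and3P [hP _ _] /and3P [hQ _ _].
exact: bumps_inj.
Qed.

Definition pt E := (lp E, rp E).

Lemma card_EN : #|EN| = #|pt @: EN|.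
Proof.
rewrite card_in_imset // => E1 E2; rewrite !inE => /and3P [m1 v1 q1] /and3P [m2 v2 q2] [e1 e2].
exact: (uniq_match key_nn q1 q2 m1 m2 v1 v2 e1 e2).
Qed.

Lemma card_EC : #|EC| = #|pt @: EC|.
Proof.
rewrite card_in_imset // => E1 E2; rewrite !inE => /and3P [m1 v1 q1] /and3P [m2 v2 q2] [e1 e2].
exact: (uniq_match key_nc q1 q2 m1 m2 v1 v2 e1 e2).
Qed.

Lemma pt_eq : pt @: EN = pt @: EC.
Proof.
apply/setP => p; apply/imsetP/imsetP => [][E]; rewrite inE => /and3P [m v _] ->.
  case: (exist_match hsw_nc m v) => F [mF vF QF e1 e2].
  by exists F; rewrite ?inE ?mF ?vF ?QF // /pt e1 e2.
case: (exist_match hsw_nn m v) => F [mF vF QF e1 e2].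
by exists F; rewrite ?inE ?mF ?vF ?QF // /pt e1 e2.
Qed.

Lemma card_NN_NC : #|NN J| = #|NC J|.
Proof. by rewrite card_NN card_NC card_EN card_EC pt_eq. Qed.

End S.

Lemma card_bij (X Y : finType) : #|X| = #|Y| -> exists f : X -> Y, bijective f.
Proof.
move=> e.
exists (fun x => enum_val (cast_ord e (enum_rank x))).
exists (fun y => enum_val (cast_ord (esym e) (enum_rank y))).
- by move=> x; rewrite enum_valK cast_ordK enum_rankK.
- by move=> y; rewrite enum_valK cast_ordKV enum_rankK.
Qed.

Theorem theorem5p3 (n : nat) (J : {set 'I_(n.-1)}) :
  0 < n ->
  exists f : {P : {set {set 'I_n}} | P \in NN J} ->
             {P : {set {set 'I_n}} | P \in NC J},
    bijective f.
Proof.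
move=> _; apply: card_bij.
by rewrite !card_sig; have := card_NN_NC J; congr (_ = _); apply: eq_card => P; rewrite !inE.
Qed.
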